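(* Let $n\ge 1$ and let $\mathcal{C}$ be a clique partition of the complete graph $K_n$ all of whose cliques have at most $n-1$ vertices. Then $\sum_{C\in\mathcal{C}}|C|\ge 3n-3$.
   Context: A clique in a graph $G$ is a set of pairwise adjacent vertices. A clique partition of $G$ is a family $\mathcal{C}$ of cliques of $G$ such that every edge of $G$ has both endpoints in exactly one member of $\mathcal{C}$. *)

(* Defs.v *)
From mathcomp Require Import all_boot.
Set Implicit Arguments. Unset Strict Implicit. Unset Printing Implicit Defensive.

(* A simple graph on a finite vertex type T is a symmetric irreflexive
   relation e : rel T; {x,y} is an edge iff e x y. *)

Definition complete_graph (n : nat) : rel 'I_n := fun x y => x != y.

Definition is_clique (T : finType) (e : rel T) (C : {set T}) : Prop :=
  forall x y, x \in C -> y \in C -> x != y -> e x y.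

Definition clique_partition (T : finType) (e : rel T) (P : {set {set T}}) : Prop :=
  (forall C, C \in P -> is_clique e C) /\
  (forall x y, e x y -> #|[set C in P | (x \in C) && (y \in C)]| = 1).

(* Main.v *)
Require Import Defs.
From mathcomp Require Import all_boot.
From mathcomp Require Import zify.

Lemma sumb_card (T : finType) (A : {set T}) (p : pred T) :
  \sum_(x in A) (p x : nat) = #|[set x in A | p x]|.
Proof.
rewrite -sum1_card big_mkcond [RHS]big_mkcond /=; apply: eq_bigr => x _.
by rewrite inE; case: (x \in A); case: (p x).
Qed.

Lemma sum_r (n : nat) (P : {set {set 'I_n}}) :
  \sum_(C in P) #|C| = \sum_v #|[set C in P | v \in C]|.
Proof.
transitivity (\sum_(C in P) \sum_v (v \in C : nat)).
  apply: eq_bigr => C _; rewrite -sum1_card big_mkcond /=.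
  by apply: eq_bigr => v _; case: (v \in C).
rewrite exchange_big /=; apply: eq_bigr => v _.
by rewrite -sumb_card.
Qed.

Lemma cover (n : nat) (P : {set {set 'I_n}}) (v : 'I_n) (S : {set 'I_n}) m :
  clique_partition (@complete_graph n) P ->
  v \notin S -> (forall C, C \in P -> v \in C -> #|C :&: S| <= m) ->
  #|S| <= #|[set C in P | v \in C]| * m.
Proof.
move=> [_ hP] vS hm.
rewrite -sum1_card -sum_nat_const.
apply: (@leq_trans (\sum_(x in S) \sum_(C in [set C in P | v \in C]) (x \in C : nat))).
  apply: leq_sum => x xS.
  have vx : complete_graph v x by rewrite /complete_graph; apply/eqP => e; rewrite e xS in vS.
  have := hP _ _ vx => h1.
  have : 0 < #|[set C in P | (v \in C) && (x \in C)]| by rewrite h1.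
  case/card_gt0P => C; rewrite inE => /andP [CP /andP [vC xC]].
  rewrite (bigD1 C) /=; last by rewrite inE CP vC.
  by rewrite xC.
rewrite exchange_big /=; apply: leq_sum => C; rewrite inE => /andP [CP vC].
rewrite sumb_card; apply: leq_trans (hm C CP vC).
by apply: subset_leq_card; apply/subsetP => x; rewrite !inE => /andP [-> ->].
Qed.

Lemma inter_le1 (n : nat) (P : {set {set 'I_n}}) (C0 D : {set 'I_n}) :
  clique_partition (@complete_graph n) P -> C0 \in P -> D \in P -> D != C0 ->
  #|D :&: C0| <= 1.
Proof.
move=> [_ hP] C0P DP DC0; rewrite leqNgt; apply/negP => /card_gt1P [x [y [xi yi xy]]].
move: xi yi; rewrite !inE => /andP [xD xC] /andP [yD yC].
have := hP x y xy => h.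
have : #|[set D; C0]| <= #|[set C in P | (x \in C) && (y \in C)]|.
  apply: subset_leq_card; apply/subsetP => E; rewrite !inE => /orP [] /eqP ->;
  by rewrite ?DP ?C0P ?xD ?yD ?xC ?yC.
by rewrite h cards2 DC0.
Qed.

Theorem mainTheorem2 (n : nat) (P : {set {set 'I_n}}) :
  1 <= n ->
  clique_partition (@complete_graph n) P ->
  (forall C, C \in P -> #|C| <= n - 1) ->
  3 * n - 3 <= \sum_(C in P) #|C|.
Proof.
move=> n1 hcp hsz.
case: (leqP n 1) => [hn|hn]; first by have -> : 3 * n - 3 = 0 by lia.
pose o0 : 'I_n := Ordinal (ltnW hn).
pose o1 : 'I_n := Ordinal hn.
have e01 : complete_graph o0 o1 by [].
have : 0 < #|[set C in P | (o0 \in C) && (o1 \in C)]| by rewrite (proj2 hcp _ _ e01).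
case/card_gt0P => C1; rewrite inE => /andP [C1P _].
case: (@arg_maxnP _ C1 (mem P) (fun C : {set 'I_n} => #|C|) C1P) => C0 C0P C0max.
remember #|C0| as k eqn:hkdef.
have hk : k <= n - 1 by rewrite hkdef; apply: hsz.
rewrite sum_r.
have gen : forall v : 'I_n, n - 1 <= #|[set C in P | v \in C]| * (k - 1).
  move=> v; have := @cover n P v [set~ v] (k - 1) hcp.
  rewrite cardsC1 card_ord -subn1 setC11; apply => // D DP vD.
  have := C0max D DP; rewrite /=; have := cardsD1 v D; rewrite vD -setDE /=; move=> ->; rewrite add1n subn1 => h; rewrite -ltnS; apply: leq_trans h _; exact: leqSpred.
case: (leqP k 2) => hk2.
  have : \sum_(v : 'I_n) (n - 1) <= \sum_v #|[set C in P | v \in C]|.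
    apply: leq_sum => v _; have := gen v; have [->|->] : k - 1 = 0 \/ k - 1 = 1 by lia.
    by rewrite muln0; lia.
    by rewrite muln1.
  have k2 : 1 < k.
    rewrite ltnNge; apply/negP => hk1; have := gen o0.
    have -> : k - 1 = 0 by lia.
    rewrite muln0; lia.
  have n3 : 3 <= n by lia.
  rewrite sum_nat_const card_ord => hs; apply: leq_trans hs.
  have -> : n * (n - 1) = 3 * n - 3 + (n - 3) * (n - 1) by nia.
  exact: leq_addr.
have inC : forall v, v \in C0 -> 2 <= #|[set C in P | v \in C]|.
  move=> v vC; have := @cover n P v [set~ v] (n - 2) hcp.
  rewrite cardsC1 card_ord -subn1 setC11 => h.
  have := h isT; have : forall C, C \in P -> v \in C -> #|C :&: [set~ v]| <= n - 2.
    move=> D DP vD; have := hsz D DP; have := cardsD1 v D; rewrite vD -setDE /=; lia.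
  move=> /[swap] /[apply]; case: #|_| => [|[|r]] hr //; move: hr; rewrite ?mul0n ?mul1n; lia.
have outC : forall v, v \notin C0 -> k <= #|[set C in P | v \in C]|.
  move=> v vC; have := @cover n P v C0 1 hcp vC; rewrite muln1 hkdef; apply.
  move=> D DP vD; rewrite (@inter_le1 n P C0 D) //.
  by apply/eqP => e; rewrite -e vD in vC.
rewrite (bigID (fun v => v \in C0)) /=.
have h1 : \sum_(v | v \in C0) 2 <= \sum_(v | v \in C0) #|[set C in P | v \in C]|.
  by apply: leq_sum => v; apply: inC.
have h2 : \sum_(v | v \notin C0) k <= \sum_(v | v \notin C0) #|[set C in P | v \in C]|.
  by apply: leq_sum => v; apply: outC.
rewrite sum_nat_const in h1; rewrite sum_nat_const in h2.
have hc := cardC C0; rewrite card_ord -hkdef in hc.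
move: h1 h2.
set c := #|[predC C0]|.
set s1 := \sum_(v in C0) _.
set s2 := \sum_(v | v \notin C0) _.
have key : 3 * n - 3 <= k * 2 + c * k.
  have -> : c = n - k by lia.
  have [a ea] : exists a, k = a + 3 by exists (k - 3); lia.
  have [b eb] : exists b, n = a + b + 4 by exists (n - a - 4); lia.
  rewrite eb ea; have -> : a + b + 4 - (a + 3) = b + 1 by lia.
  have -> : 3 * (a + b + 4) - 3 = 3 * a + 3 * b + 9 by lia.
  rewrite !mulnDl !mulnDr; lia.
lia.
Qed.
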